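(* Let $\kappa, m, n$ be positive integers with $m$ and $n$ coprime, and suppose there is an integer $s$ with \[ \kappa^4 m^4 n^4 - 32\kappa(m^2+n^2) = s^2. \] Then $(\kappa, m, n) = (4, 1, 1)$. *)

(* Defs.v *)
From Stdlib Require Import ZArith.

(* Main.v *)
Require Import Defs.
From Stdlib Require Import ZArith Lia List Bool.
Open Scope bool_scope.
Open Scope Z_scope.

Definition rng (len : nat) : list Z := map Z.of_nat (seq 1 len).

Lemma in_rng (len : nat) (x : Z) : 1 <= x <= Z.of_nat len -> In x (rng len).
Proof.
  intros H. unfold rng. apply in_map_iff. exists (Z.to_nat x). split; [lia|].
  apply in_seq. lia.
Qed.

Definition check : bool :=
  forallb (fun d => forallb (fun K => forallb (fun m =>
    if d * K * m ^ 2 <=? 64 then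
      forallb (fun n =>
        if (m <=? n) && (Z.gcd m n =? 1) &&
           (n ^ 2 * (2 * d * K ^ 2 * m ^ 2 - 32 * K) =? 32 * K * m ^ 2 + d ^ 2)
        then (K =? 4) && (m =? 1) && (n =? 1) else true) (rng 78)
    else true) (rng 8)) (rng 64)) (rng 64).

Lemma check_ok : check = true.
Proof. vm_compute. reflexivity. Qed.

Lemma check_sound d K m n :
  1 <= d <= 64 -> 1 <= K <= 64 -> 1 <= m <= 8 -> 1 <= n <= 78 ->
  d * K * m ^ 2 <= 64 -> m <= n -> Z.gcd m n = 1 ->
  n ^ 2 * (2 * d * K ^ 2 * m ^ 2 - 32 * K) = 32 * K * m ^ 2 + d ^ 2 ->
  K = 4 /\ m = 1 /\ n = 1.
Proof.
  intros Hd HK Hm Hn Hb Hmn Hg He.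
  pose proof check_ok as C. unfold check in C.
  rewrite forallb_forall in C. specialize (C d (in_rng 64 d ltac:(lia))).
  rewrite forallb_forall in C. specialize (C K (in_rng 64 K ltac:(lia))).
  rewrite forallb_forall in C. specialize (C m (in_rng 8 m ltac:(lia))).
  apply Z.leb_le in Hb. rewrite Hb in C.
  rewrite forallb_forall in C. specialize (C n (in_rng 78 n ltac:(lia))).
  apply Z.leb_le in Hmn. apply Z.eqb_eq in Hg. apply Z.eqb_eq in He.
  rewrite Hmn, Hg, He in C. simpl in C.
  apply andb_prop in C as [C1 C3]. apply andb_prop in C1 as [C1 C2].
  apply Z.eqb_eq in C1, C2, C3. auto.
Qed.

Lemma core K m n d :
  0 < K -> 0 < m -> m <= n -> 0 < d -> d <= K^2*m^2*n^2 ->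
  d * (2 * (K^2*m^2*n^2) - d) = 32 * K * (m^2 + n^2) -> Z.gcd m n = 1 ->
  K = 4 /\ m = 1 /\ n = 1.
Proof.
  intros HK Hm Hmn Hd HdX He Hg.
  set (X := K^2*m^2*n^2) in *.
  assert (H1 : d * X <= 32 * K * (m^2 + n^2)).
  { rewrite <- He. nia. }
  assert (H2 : m^2 <= n^2) by nia.
  assert (H3 : (d*K*m^2) * (K*n^2) <= 64 * (K*n^2)).
  { unfold X in H1. nia. }
  assert (H4 : d*K*m^2 <= 64).
  { apply Z.mul_le_mono_pos_r in H3; [lia|nia]. }
  assert (Hd64 : d <= 64) by nia.
  assert (HK64 : K <= 64) by nia.
  assert (Hm8 : m <= 8) by nia.
  assert (HKm : K * m^2 <= 64) by nia.
  assert (He2 : n ^ 2 * (2 * d * K ^ 2 * m ^ 2 - 32 * K) = 32 * K * m ^ 2 + d ^ 2).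
  { unfold X in He. nia. }
  assert (Hden : 1 <= 2 * d * K ^ 2 * m ^ 2 - 32 * K).
  { destruct (Z_le_gt_dec 1 (2 * d * K ^ 2 * m ^ 2 - 32 * K)); [auto|].
    exfalso. assert (0 <= n^2) by nia. nia. }
  assert (Hn2 : n^2 <= 6144) by nia.
  assert (Hn : n <= 78) by nia.
  apply (check_sound d K m n); lia.
Qed.

Theorem theorem5 (kappa m n s : Z) :
  0 < kappa -> 0 < m -> 0 < n -> Z.gcd m n = 1 ->
  kappa ^ 4 * m ^ 4 * n ^ 4 - 32 * kappa * (m ^ 2 + n ^ 2) = s ^ 2 ->
  kappa = 4 /\ m = 1 /\ n = 1.
Proof.
  intros HK Hm Hn Hg H.
  set (t := Z.abs s).
  assert (Ht : s^2 = t*t) by (unfold t; destruct (Z.abs_spec s) as [[_ ->]|[_ ->]]; ring).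
  assert (Ht0 : 0 <= t) by (unfold t; lia).
  set (X := kappa^2*m^2*n^2).
  assert (HX : X*X - t*t = 32*kappa*(m^2+n^2)) by (unfold X; rewrite <- Ht, <- H; ring).
  assert (Hpos : 0 < 32*kappa*(m^2+n^2)) by nia.
  assert (HX0 : 0 <= X) by (unfold X; nia).
  assert (HtX : t < X) by nia.
  set (d := X - t).
  assert (Hd : d * (2*X - d) = 32*kappa*(m^2+n^2)) by (unfold d; rewrite <- HX; ring).
  destruct (Z_le_gt_dec m n) as [Hmn|Hmn].
  - apply (core kappa m n d); try lia; auto.
  - assert (Hc : kappa = 4 /\ n = 1 /\ m = 1).
    { apply (core kappa n m d); try lia;
      replace (kappa ^ 2 * n ^ 2 * m ^ 2) with X by (unfold X; ring); try lia.
      - rewrite Z.gcd_comm. auto. }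
    tauto.
Qed.
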